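(* Let $g\in I^+$ be an element such that $N(g)=g\theta(g)$ is affine generic. If $y\in\mathrm{GL}_{2n}(E)$ satisfies $yg\theta(y)^{-1}\in ZI^+\langle\varphi_1\rangle$, then $y\in ZI\langle\varphi_1\rangle$.
   Context: $F$ is a $p$-adic field, $E/F$ unramified quadratic with conjugation $c$, $\varpi$ a uniformizer of $F$, $\bar x$ reduction mod $\mathfrak{p}_E$. In $\mathrm{GL}_{2n}(E)$: $I$ is the set of matrices in $\mathrm{GL}_{2n}(\mathcal{O}_E)$ that are upper triangular modulo $\mathfrak{p}_E$ (Iwahori subgroup); $I^+\subset I$ those with diagonal entries in $1+\mathfrak{p}_E$; $Z=E^\times$ the scalar matrices. Affine simple components of $x\in I^+$: $(\overline{x_{12}},\ldots,\overline{x_{2n-1,2n}},\overline{x_{2n,1}\varpi^{-1}})\in k_E^{2n}$; $x$ is affine generic if all are nonzero. $\varphi_1=\begin{pmatrix}0&I_{2n-1}\\\varpi&0\end{pmatrix}$. $J$ is antidiagonal with $J_{i,2n+1-i}=(-1)^{i-1}$, $\theta(g)=J\,{}^tc(g)^{-1}J^{-1}$, $N(g)=g\theta(g)$ (note $\theta$ preserves $I^+$). *)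

(* Defs.v *)
From HB Require Import structures.
From mathcomp Require Import all_boot all_order all_algebra.
Set Implicit Arguments. Unset Strict Implicit. Unset Printing Implicit Defensive.
Import Order.TTheory GRing.Theory Num.Theory.
Local Open Scope ring_scope.

(* Setup: E is a complete, discretely valued field of characteristic 0 with
   finite residue field (i.e. a p-adic field), with a nontrivial involutive
   field automorphism c (so F := fixed field of c, and E/F is quadratic), and
   an element unif of F (c unif = unif) of normalized E-valuation 1; the
   latter is a uniformizer of F and says E/F is unramified.
   The valuation [val] is only meaningful on nonzero elements. *)
Record padic_unram_quad (E : fieldType) := PadicUnramQuad {
  val : E -> int;
  conj : {rmorphism E -> E};
  unif : E;
  val_mul : forall x y : E, x != 0 -> y != 0 -> val (x * y) = val x + val y;
  val_add : forall x y : E, x != 0 -> y != 0 -> x + y != 0 ->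
              Num.min (val x) (val y) <= val (x + y);
  unif_neq0 : unif != 0;
  val_unif : val unif = 1;
  conj_unif : conj unif = unif;
  conj_invol : forall x, conj (conj x) = x;
  conj_nontriv : exists x, conj x != x;
  val_conj : forall x, x != 0 -> val (conj x) = val x;
  char0 : [pchar E] =i pred0;
  residue_finite : exists s : seq E, forall x : E, (x == 0) || (0 <= val x) ->
     exists2 y, y \in s & ((y == 0) || (0 <= val y)) &&
                          ((x - y == 0) || (0 < val (x - y)));
  complete : forall u : nat -> E,
     (forall k : int, exists N, forall m p, (N <= m)%N -> (N <= p)%N ->
          u m = u p \/ k <= val (u m - u p)) ->
     exists l, forall k : int, exists N, forall m, (N <= m)%N ->
          u m = l \/ k <= val (u m - l)
}.

Section Defs.
Variables (E : fieldType) (S : padic_unram_quad E).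

Definition inO (x : E) : bool := (x == 0) || (0 <= val S x).
Definition inP (x : E) : bool := (x == 0) || (0 < val S x).

Variable m : nat.

Definition in_GLO (x : 'M[E]_m) : bool :=
  [forall i, forall j, inO (x i j)] && (\det x != 0) && (val S (\det x) == 0).

Definition in_Iw (x : 'M[E]_m) : bool :=
  in_GLO x && [forall i : 'I_m, forall j : 'I_m, (j < i)%N ==> inP (x i j)].

Definition in_Iplus (x : 'M[E]_m) : bool :=
  in_Iw x && [forall i : 'I_m, inP (x i i - 1)].

(* affine generic: all affine simple components (the residues of
   x_{i,i+1} and x_{m,1} unif^-1) are nonzero in k_E, i.e. not in p_E *)
Definition affine_generic (x : 'M[E]_m) : Prop :=
  (forall i j : 'I_m, nat_of_ord j = (nat_of_ord i).+1 -> ~~ inP (x i j)) /\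
  (forall i j : 'I_m, nat_of_ord i = m.-1 -> nat_of_ord j = 0%N ->
     ~~ inP (x i j / unif S)).

(* varphi_1 = [[0, I_{m-1}], [unif, 0]] *)
Definition phi1 : 'M[E]_m :=
  \matrix_(i, j) (if nat_of_ord j == (nat_of_ord i).+1 then 1
                  else if (nat_of_ord i == m.-1) && (nat_of_ord j == 0%N)
                       then unif S else 0).

Definition mxpowz (A : 'M[E]_m) (k : int) : 'M[E]_m :=
  match k with
  | Posz p => iter p (mulmx A) 1%:M
  | Negz p => iter p.+1 (mulmx (invmx A)) 1%:M
  end.

(* J antidiagonal with J_{i, m+1-i} = (-1)^(i-1) (1-indexed) *)
Definition Jmx : 'M[E]_m :=
  \matrix_(i, j) (if (nat_of_ord i + nat_of_ord j == m.-1)%N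
                  then (-1) ^+ (nat_of_ord i) else 0).

Definition theta (g : 'M[E]_m) : 'M[E]_m :=
  Jmx *m invmx ((map_mx (conj S) g)^T) *m invmx Jmx.

Definition Nmx (g : 'M[E]_m) : 'M[E]_m := g *m theta g.

Definition in_ZIplusPhi (x : 'M[E]_m) : Prop :=
  exists a : E, exists h : 'M[E]_m, exists k : int,
    [/\ a != 0, in_Iplus h & x = a%:M *m h *m mxpowz phi1 k].

Definition in_ZIPhi (x : 'M[E]_m) : Prop :=
  exists a : E, exists h : 'M[E]_m, exists k : int,
    [/\ a != 0, in_Iw h & x = a%:M *m h *m mxpowz phi1 k].

End Defs.

(* Main.v *)
Require Import Defs.
From HB Require Import structures.
From mathcomp Require Import all_boot all_order all_algebra.
From mathcomp Require Import all_fingroup zify ring lra.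
Set Implicit Arguments. Unset Strict Implicit. Unset Printing Implicit Defensive.
Import Order.TTheory GRing.Theory Num.Theory.
Local Open Scope ring_scope.

Section Val.
Variables (E : fieldType) (S : padic_unram_quad E).
Definition v (x : E) : int := Defs.val S x.
Lemma v_mul x y : x != 0 -> y != 0 -> v (x * y) = v x + v y.
Proof. exact: val_mul. Qed.
Lemma v_add x y : x != 0 -> y != 0 -> x + y != 0 -> Num.min (v x) (v y) <= v (x + y).
Proof. exact: val_add. Qed.

Lemma val1 : v 1 = 0.
Proof. have h : v (1 * 1) = v 1 + v 1 := v_mul (oner_neq0 E) (oner_neq0 E). rewrite mulr1 in h; lia. Qed.

Lemma valN1 : v (-1) = 0.
Proof.
have h1 : (-1 : E) != 0 by rewrite oppr_eq0 oner_neq0.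
have h : v ((-1) * (-1)) = v (-1) + v (-1) := v_mul h1 h1.
rewrite mulrNN mulr1 val1 in h; lia.
Qed.

Lemma valN x : v (- x) = v x.
Proof.
have [->|x0] := eqVneq x 0; first by rewrite oppr0.
have h1 : (-1 : E) != 0 by rewrite oppr_eq0 oner_neq0.
by rewrite -mulN1r (v_mul h1 x0) valN1 add0r.
Qed.

Lemma valV x : x != 0 -> v x^-1 = - v x.
Proof.
move=> x0; have xi0 : x^-1 != 0 by rewrite invr_eq0.
have h : v (x * x^-1) = v x + v x^-1 := v_mul x0 xi0.
rewrite mulfV // val1 in h; lia.
Qed.

Lemma val_add_ge D x y : (x == 0) || (D <= v x) -> (y == 0) || (D <= v y) ->
  (x + y == 0) || (D <= v (x + y)).
Proof.
have [->|x0] := eqVneq x 0; first by rewrite add0r => _ hy.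
have [->|y0] := eqVneq y 0; first by rewrite addr0 (negbTE x0) => hx _.
have [->//|s0] := eqVneq (x + y) 0.
move=> /= hx hy; have := v_add x0 y0 s0.
by apply: le_trans; rewrite le_min hx hy.
Qed.

Lemma val_dom x y : x != 0 -> (y == 0) || (v x < v y) ->
  x + y != 0 /\ v (x + y) = v x.
Proof.
move=> x0; have [->|y0] := eqVneq y 0; first by rewrite addr0.
move=> /= hxy.
have s0 : x + y != 0.
  apply/negP=> /eqP h; have : y = - x by rewrite -(addKr x y) h addr0.
  by move=> ey; move: hxy; rewrite ey valN ltxx.
split => //.
have h1 := v_add x0 y0 s0.
have h2 : v x <= v (x + y) by move: h1; rewrite ge_min => /orP[//|h]; lia.
have ny0 : - y != 0 by rewrite oppr_eq0.
have := v_add s0 ny0; rewrite addrK => h3.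
have /(_ x0) {}h3 := h3.
move: h3; rewrite valN ge_min => /orP[h|h]; lia.
Qed.

Variable m : nat.
Hypothesis m_gt1 : (1 < m)%N.

Definition VV (x : E) : int := m%:Z * v x.
Definition mg (D : int) (x : E) : bool := (x == 0) || (D <= VV x).

Lemma VV1 : VV 1 = 0. Proof. by rewrite /VV val1 mulr0. Qed.
Lemma VVN x : VV (- x) = VV x. Proof. by rewrite /VV valN. Qed.
Lemma VVM x y : x != 0 -> y != 0 -> VV (x * y) = VV x + VV y.
Proof. by move=> x0 y0; rewrite /VV v_mul // mulrDr. Qed.
Lemma VVV x : x != 0 -> VV x^-1 = - VV x.
Proof. by move=> x0; rewrite /VV valV // mulrN. Qed.

Lemma mg_add D x y : mg D x -> mg D y -> mg D (x + y).
Proof.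
rewrite /mg /VV => hx hy.
have hm : (0 < m%:Z)%R by lia.
have [->|x0] := eqVneq x 0; first by rewrite add0r.
have [->|y0] := eqVneq y 0; first by rewrite addr0.
have [->//|s0] := eqVneq (x + y) 0.
move: hx hy; rewrite (negbTE x0) (negbTE y0) /= => hx hy.
have : Num.min (v x) (v y) <= v (x + y) := v_add x0 y0 s0.
rewrite ge_min => /orP[h|h]; nia.
Qed.

Lemma mg_opp D x : mg D (- x) = mg D x.
Proof. by rewrite /mg oppr_eq0 VVN. Qed.

Lemma mg_sub D x y : mg D x -> mg D y -> mg D (x - y).
Proof. by move=> hx hy; apply: mg_add; rewrite ?mg_opp. Qed.

Lemma mg_le D D' x : D' <= D -> mg D x -> mg D' x.
Proof. by rewrite /mg => h /orP[->//|h']; rewrite (le_trans h h') orbT. Qed.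

Lemma mg_mul D D' x y : mg D x -> mg D' y -> mg (D + D') (x * y).
Proof.
rewrite /mg.
have [->|x0] := eqVneq x 0; first by rewrite mul0r eqxx.
have [->|y0] := eqVneq y 0; first by rewrite mulr0 eqxx.
by rewrite /= mulf_eq0 (negbTE x0) (negbTE y0) /= VVM // => h1 h2; rewrite lerD.
Qed.

Lemma mg0 D : mg D 0. Proof. by rewrite /mg eqxx. Qed.
Lemma mg1 : mg 0 1. Proof. by rewrite /mg VV1 lexx orbT. Qed.

Lemma mg_sum (I : Type) (r : seq I) (P : pred I) (F : I -> E) D :
  (forall i, P i -> mg D (F i)) -> mg D (\sum_(i <- r | P i) F i).
Proof. by move=> h; apply: (big_ind (mg D)) => //; [exact: mg0 | exact: mg_add]. Qed.

Lemma mg_prod (I : finType) (P : pred I) (F : I -> E) (a : I -> int) :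
  (forall i, P i -> mg (a i) (F i)) ->
  mg (\sum_(i | P i) a i) (\prod_(i | P i) F i).
Proof.
move=> h; apply: (big_ind2 (fun D x => mg D x)) => //; first exact: mg1.
by move=> ? ? ? ? h1 h2; rewrite addrC mulrC; apply: mg_mul.
Qed.

Lemma VV_dom x y : x != 0 -> mg (VV x + 1) y -> x + y != 0 /\ VV (x + y) = VV x.
Proof.
move=> x0 hy.
have hy' : (y == 0) || (v x < v y).
  move: hy; rewrite /mg /VV; case/orP=> [->//|h]; apply/orP; right.
  have hm : (1 < m%:Z)%R by lia.
  nia.
have [s0 e] := val_dom x0 hy'.
by split => //; rewrite /VV e.
Qed.

Lemma mg_dom_sum (I : finType) (P : pred I) (F : I -> E) i0 :
  P i0 -> F i0 != 0 -> (forall i, P i -> i != i0 -> mg (VV (F i0) + 1) (F i)) ->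
  \sum_(i | P i) F i != 0 /\ VV (\sum_(i | P i) F i) = VV (F i0).
Proof.
move=> Pi0 nz h; rewrite (bigD1 i0) //=; apply: VV_dom => //.
by apply: mg_sum => i /andP[Pi ne]; apply: h.
Qed.

(* multiples of m *)
Lemma VV_floor D x : (- (m%:Z) < D)%R -> mg D x -> mg 0 x.
Proof.
rewrite /mg /VV => hD /orP[->//|h]; apply/orP; right.
have : (0 <= v x)%R.
  have : (v x <= -1) \/ (0 <= v x) by lia.
  case=> // h'; nia.
nia.
Qed.

Lemma VV_ge1 D x : (0 < D)%R -> mg D x -> (x == 0) || (1 <= v x).
Proof.
rewrite /mg /VV => hD /orP[->//|h]; apply/orP; right.
have : (v x <= 0) \/ (1 <= v x) by lia.
case=> // h'; nia.
Qed.



Definition ok (A : 'M[E]_m) (d : int) : Prop :=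
  forall i j : 'I_m, mg (d + (i : nat)%:Z - (j : nat)%:Z) (A i j).

Lemma ok_mul A B d e : ok A d -> ok B e -> ok (A *m B) (d + e).
Proof.
move=> hA hB i j; rewrite mxE; apply: mg_sum => k _.
apply: mg_le (mg_mul (hA i k) (hB k j)); lia.
Qed.

Lemma ok_add A B d : ok A d -> ok B d -> ok (A + B) d.
Proof. by move=> hA hB i j; rewrite mxE; apply: mg_add. Qed.

Lemma ok_opp A d : ok A d -> ok (- A) d.
Proof. by move=> hA i j; rewrite mxE mg_opp. Qed.

Lemma ok_sub A B d : ok A d -> ok B d -> ok (A - B) d.
Proof. by move=> hA hB; apply: ok_add => //; apply: ok_opp. Qed.

Lemma ok_le A d d' : d' <= d -> ok A d -> ok A d'.
Proof. by move=> h hA i j; apply: mg_le (hA i j); lia. Qed.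

Lemma ok_scalar a : ok a%:M (VV a).
Proof.
move=> i j; rewrite mxE; have [->|ne] := eqVneq i j.
  by rewrite mulr1n /mg; apply/orP; right; lia.
by rewrite mulr0n mg0.
Qed.

Lemma ok1 : ok 1%:M 0.
Proof. by rewrite -VV1; apply: ok_scalar. Qed.

Lemma sum_perm_diff (s : 'S_m) :
  \sum_(k < m) ((k : nat)%:Z - (s k : nat)%:Z) = 0.
Proof.
rewrite sumrB (reindex_inj (@perm_inj _ s)) /=.
by rewrite subrr.
Qed.

Lemma mg_sign (s : 'S_m) : mg 0 ((-1) ^+ s : E).
Proof.
rewrite /mg; apply/orP; right.
by case: (odd_perm s); rewrite /= ?expr1 ?expr0 ?VVN VV1.
Qed.

Lemma ok_det A d : ok A d -> mg (m%:Z * d) (\det A).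
Proof.
move=> hA; rewrite /determinant; apply: mg_sum => s _.
rewrite -[_ * d]add0r; apply: mg_mul; first exact: mg_sign.
have -> : m%:Z * d = \sum_(i < m) (d + (i : nat)%:Z - (s i : nat)%:Z).
  rewrite (eq_bigr (fun i : 'I_m => d + ((i : nat)%:Z - (s i : nat)%:Z))); last by move=> i _; rewrite addrA.
  by rewrite big_split /= sum_perm_diff addr0 sumr_const card_ord; lia.
by apply: mg_prod => i _; apply: hA.
Qed.

Lemma ok_inv A d : ok A d -> A \in unitmx -> VV (\det A) <= m%:Z * d ->
  ok (invmx A) (- d).
Proof.
move=> hA uA hdet i j.
have d0 : \det A != 0 by rewrite -unitfE.
rewrite /invmx uA !mxE.
have hc : mg ((m%:Z - 1) * d + (i : nat)%:Z - (j : nat)%:Z) (cofactor A j i).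
  rewrite expand_cofactor; apply: mg_sum => s /eqP sj.
  rewrite -[X in mg X _]add0r; apply: mg_mul; first exact: mg_sign.
  have -> : (m%:Z - 1) * d + (i : nat)%:Z - (j : nat)%:Z =
      \sum_(k | j != k) (d + (k : nat)%:Z - (s k : nat)%:Z).
    have e := sum_perm_diff s.
    have e2 : \sum_(k < m) (d + (k : nat)%:Z - (s k : nat)%:Z) = m%:Z * d.
      rewrite (eq_bigr (fun k : 'I_m => d + ((k : nat)%:Z - (s k : nat)%:Z))); last by move=> k _; rewrite addrA.
      by rewrite big_split /= e addr0 sumr_const card_ord; lia.
    rewrite (bigD1 j) //= sj in e2.
    rewrite (eq_bigl (fun k => k != j)); last by move=> k; rewrite eq_sym.
    move: e2; set X := \sum_(k | _) _ => e2; lia.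
  by apply: mg_prod => k _; apply: hA.
have hdi : mg (- VV (\det A)) ((\det A)^-1).
  by rewrite /mg VVV // lexx orbT.
apply: mg_le (mg_mul hdi hc); lia.
Qed.

Lemma invmxM (A B : 'M[E]_m) : A \in unitmx -> B \in unitmx ->
  invmx (A *m B) = invmx B *m invmx A.
Proof.
move=> uA uB; have uAB : A *m B \in unitmx by rewrite unitmx_mul uA uB.
have h : (A *m B) *m (invmx B *m invmx A) = 1%:M.
  by rewrite mulmxA -(mulmxA A) mulmxV // mulmx1 mulmxV.
by rewrite -[invmx (A *m B)]mulmx1 -h mulmxA mulVmx ?mul1mx.
Qed.

Definition good (A : 'M[E]_m) (d : int) : Prop :=
  [/\ A \in unitmx, ok A d & ok (invmx A) (- d)].

Lemma good_mul A B d e : good A d -> good B e -> good (A *m B) (d + e).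
Proof.
case=> uA oA oiA [uB oB oiB]; split.
- by rewrite unitmx_mul uA uB.
- exact: ok_mul.
- rewrite invmxM //; apply: ok_le (ok_mul oiB oiA); lia.
Qed.

Lemma good_inv A d : good A d -> good (invmx A) (- d).
Proof. by case=> uA oA oiA; split; rewrite ?unitmx_inv ?invmxK ?opprK. Qed.

Lemma good1 : good 1%:M 0.
Proof. by split; rewrite ?unitmx1 ?invmx1 ?oppr0 //; apply: ok1. Qed.

Lemma good_scalar a : a != 0 -> good a%:M (VV a).
Proof.
move=> a0; split.
- by rewrite unitmxE det_scalar unitfE expf_neq0.
- exact: ok_scalar.
- by rewrite invmx_scalar -VVV //; apply: ok_scalar.
Qed.

Lemma det_dom (A : 'M[E]_m) (sg : 'S_m) :
  \prod_i A i (sg i) != 0 ->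
  (forall s : 'S_m, s != sg -> mg (VV (\prod_i A i (sg i)) + 1) (\prod_i A i (s i))) ->
  \det A != 0 /\ VV (\det A) = VV (\prod_i A i (sg i)).
Proof.
move=> nz h.
have sgn0 : forall s : 'S_m, ((-1) ^+ s : E) != 0.
  by move=> s; rewrite expf_neq0 // oppr_eq0 oner_neq0.
have sgnV : forall s : 'S_m, VV ((-1) ^+ s : E) = 0.
  by move=> s; case: (odd_perm s); rewrite /= ?expr1 ?expr0 ?VVN VV1.
have [] := @mg_dom_sum _ (fun _ => true) (fun s : 'S_m => (-1) ^+ s * \prod_i A i (s i)) sg isT.
- by rewrite mulf_neq0.
- move=> s _ ne; rewrite VVM // sgnV add0r -[X in mg X _]add0r.
  by apply: mg_mul; [rewrite /mg sgnV lexx orbT | apply: h].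
- by move=> nz2 e; split; rewrite /determinant //= e VVM // sgnV add0r.
Qed.

Lemma predm_subproof (p : 'I_m) : ((if (p : nat) == 0%N then m.-1 else p.-1) < m)%N.
Proof. case: ifP => _; have := ltn_ord p; lia. Qed.
Definition predm (p : 'I_m) : 'I_m := Ordinal (predm_subproof p).

Lemma succm_subproof (p : 'I_m) : ((if (p : nat) == m.-1 then 0%N else p.+1) < m)%N.
Proof. case: ifP => /eqP; have := ltn_ord p; lia. Qed.
Definition succm (p : 'I_m) : 'I_m := Ordinal (succm_subproof p).

Lemma predmK : cancel predm succm.
Proof. case=> [[|k] hk]; apply: val_inj => /=; rewrite ?eqxx //; case: ifP => /eqP; lia. Qed.

Lemma succmK : cancel succm predm.
Proof. case=> k hk; apply: val_inj => /=; by case: (eqVneq k m.-1) => [->|ne]. Qed.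

Lemma succm_inj : injective succm. Proof. exact: can_inj succmK. Qed.
Lemma predm_inj : injective predm. Proof. exact: can_inj predmK. Qed.

Lemma predm_neq p : predm p != p.
Proof. apply/eqP => /(congr1 (@nat_of_ord _)) /=; have := ltn_ord p; case: ifP => /eqP; lia. Qed.

Lemma omax_subproof : (m.-1 < m)%N. Proof. by rewrite ltn_predL (ltnW m_gt1). Qed.
Definition omax : 'I_m := Ordinal omax_subproof.

Local Notation P1 := (@phi1 E S m).

Lemma phi1E i j : P1 i j = if j == succm i then (if i == omax then unif S else 1) else 0.
Proof.
rewrite mxE -!val_eqE /=.
have hj := ltn_ord j; have hi := ltn_ord i.
case: (eqVneq (i : nat) m.-1) => e.
  rewrite e /=.
  by have -> : ((j : nat) == m.-1.+1) = false by apply/eqP; lia.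
by case: ifP.
Qed.

Lemma unif0 : unif S != 0. Proof. exact: unif_neq0. Qed.
Lemma VVunif : VV (unif S) = m%:Z.
Proof. by rewrite /VV /v val_unif mulr1. Qed.

Lemma ok_phi1 : ok P1 1.
Proof.
move=> i j; rewrite phi1E; case: ifP => [/eqP ->|]; last by rewrite mg0.
rewrite /mg /=; case: ifP => [/eqP ->|/eqP ne]; apply/orP; right.
  by rewrite VVunif /= eqxx /=; lia.
rewrite VV1 /=; have := ltn_ord i; case: ifP => /eqP h; first by case: ne; apply: val_inj.
lia.
Qed.

Lemma perm_succm_subproof : injective succm. Proof. exact: succm_inj. Qed.
Definition sgsucc : 'S_m := perm perm_succm_subproof.

Lemma prod_phi1 : \prod_i P1 i (sgsucc i) = unif S.
Proof.
rewrite (bigD1 omax) //= big1 ?mulr1.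
  by rewrite /sgsucc permE phi1E eqxx eqxx.
by move=> i /negbTE ne; rewrite /sgsucc permE phi1E eqxx ne.
Qed.

Lemma det_phi1 : \det P1 != 0 /\ VV (\det P1) = m%:Z.
Proof.
rewrite -VVunif -prod_phi1; apply: det_dom; first by rewrite prod_phi1 unif0.
move=> s ne; apply/orP; left.
have [i hi] : exists i, s i != sgsucc i.
  apply/existsP; move: ne; apply: contraR; rewrite negb_exists => /forallP h.
  by apply/eqP/permP => i; apply/eqP; have := h i; rewrite negbK.
rewrite (bigD1 i) //= phi1E.
by move: hi; rewrite /sgsucc permE => /negbTE ->; rewrite mul0r.
Qed.

Lemma good_phi1 : good P1 1.
Proof.
have [d0 dv] := det_phi1.
have u : P1 \in unitmx by rewrite unitmxE unitfE.
split => //; first exact: ok_phi1.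
by apply: ok_inv => //; [exact: ok_phi1 | rewrite dv; lia].
Qed.

Lemma good_iter (A : 'M[E]_m) d p : good A d -> good (iter p (mulmx A) 1%:M) (p%:Z * d).
Proof.
move=> hA; elim: p => [|p IH]; first by rewrite mul0r; exact: good1.
rewrite iterS; have -> : (p.+1%:Z * d) = d + p%:Z * d by lia.
exact: good_mul.
Qed.

Lemma good_pow k : good (mxpowz P1 k) k.
Proof.
case: k => p /=.
  by have := good_iter p good_phi1; rewrite mulr1.
have := good_iter p.+1 (good_inv good_phi1).
by rewrite NegzE; congr good; lia.
Qed.

Hypothesis m_even : ~~ odd m.
Local Notation J := (@Jmx E m).
Local Notation cj := (conj S).

Lemma mg_sign_nat n : mg 0 ((-1) ^+ n : E).
Proof.
rewrite /mg; apply/orP; right.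
by rewrite -signr_odd; case: (odd n); rewrite /= ?expr1 ?expr0 ?VVN VV1.
Qed.

Lemma odd_mpred : odd m.-1.
Proof.
move: m_even; rewrite -[X in odd X](prednK (ltnW m_gt1)) /=.
by rewrite negbK.
Qed.

Lemma sign_rev (i : 'I_m) : (-1) ^+ (rev_ord i : nat) = - (-1) ^+ (i : nat) :> E.
Proof.
have e : ((-1) ^+ (rev_ord i : nat) * (-1) ^+ (i : nat) = -1 :> E).
  rewrite -exprD /=.
  have -> : (m - i.+1 + i = m.-1)%N by have := ltn_ord i; lia.
  by rewrite -signr_odd odd_mpred expr1.
have sq : ((-1) ^+ (i : nat) * (-1) ^+ (i : nat) = 1 :> E).
  by rewrite -exprMn mulrNN mulr1 expr1n.
have -> : (-1) ^+ (rev_ord i : nat) = ((-1) ^+ (rev_ord i : nat) * (-1) ^+ (i : nat)) * (-1) ^+ (i : nat) :> E.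
  by rewrite -mulrA sq mulr1.
by rewrite e mulN1r.
Qed.

Lemma JE i j : J i j = if j == rev_ord i then (-1) ^+ (i : nat) else 0.
Proof.
rewrite mxE -val_eqE /=; have := ltn_ord i; have := ltn_ord j => hj hi.
have -> : ((i + j)%N == m.-1) = ((j : nat) == (m - i.+1)%N) by apply/eqP/eqP; lia.
by [].
Qed.

Lemma JmulE (X : 'M[E]_m) i l : (J *m X) i l = (-1) ^+ (i : nat) * X (rev_ord i) l.
Proof.
rewrite mxE (bigD1 (rev_ord i)) //= big1 ?addr0; first by rewrite JE eqxx.
by move=> j /negbTE ne; rewrite JE ne mul0r.
Qed.

Lemma mulJE (X : 'M[E]_m) i k : (X *m J) i k = X i (rev_ord k) * (-1) ^+ (rev_ord k : nat).
Proof.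
rewrite mxE (bigD1 (rev_ord k)) //= big1 ?addr0; first by rewrite JE rev_ordK eqxx.
move=> j ne; rewrite JE.
have -> : (k == rev_ord j) = false.
  by apply/negbTE; move: ne; apply: contra => /eqP ->; rewrite rev_ordK.
by rewrite mulr0.
Qed.

Lemma JJ : J *m J = - 1%:M.
Proof.
apply/matrixP => i l; rewrite JmulE JE !mxE rev_ordK.
have -> : (l == i) = (i == l) by rewrite eq_sym.
case: eqP => [->|_]; last by rewrite mulr0 oppr0.
by rewrite sign_rev mulrN -exprMn mulrNN mulr1 expr1n mulr1n.
Qed.

Definition K := - J.

Lemma JK : J *m K = 1%:M. Proof. by rewrite /K mulmxN JJ opprK. Qed.
Lemma KJ : K *m J = 1%:M. Proof. by rewrite /K mulNmx JJ opprK. Qed.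
Lemma Junit : J \in unitmx. Proof. by case: (mulmx1_unit JK). Qed.
Lemma Kunit : K \in unitmx. Proof. by case: (mulmx1_unit JK). Qed.
Lemma invJ : invmx J = K.
Proof. by rewrite -[invmx J]mulmx1 -JK mulmxA mulVmx ?mul1mx // Junit. Qed.
Lemma invK : invmx K = J.
Proof. by rewrite -invJ invmxK. Qed.
Lemma KK : K *m K = - 1%:M. Proof. by rewrite /K mulmxN mulNmx opprK JJ. Qed.

Lemma Jtr : J^T = K.
Proof.
apply/matrixP => i j.
have -> : J^T i j = J j i by rewrite mxE.
have -> : K i j = - J i j by rewrite /K mxE.
rewrite !JE; have -> : (i == rev_ord j) = (j == rev_ord i).
  by apply/eqP/eqP => ->; rewrite rev_ordK.
case: eqP => [->|_]; last by rewrite oppr0.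
by rewrite sign_rev.
Qed.
Lemma Ktr : K^T = J. Proof. by rewrite -Jtr trmxK. Qed.

Lemma mapJ : map_mx cj J = J.
Proof.
apply/matrixP => i j.
by rewrite !mxE (fun_if cj) rmorph_sign rmorph0.
Qed.
Lemma mapK : map_mx cj K = K.
Proof. by rewrite /K map_mxN mapJ. Qed.

Lemma map_cjK (A : 'M[E]_m) : map_mx cj (map_mx cj A) = A.
Proof. by apply/matrixP => i j; rewrite !mxE conj_invol. Qed.

Lemma thetaE (A : 'M[E]_m) : theta S A = J *m (map_mx cj (invmx A))^T *m K.
Proof. by rewrite /theta map_invmx trmx_inv invJ. Qed.

Lemma ok_conj (A : 'M[E]_m) d : ok A d -> ok (map_mx cj A) d.
Proof.
move=> hA i j; rewrite mxE; move: (hA i j); rewrite /mg fmorph_eq0.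
case: eqP => //= /eqP ne; rewrite /VV /v val_conj //.
Qed.

Lemma ok_JtrK (B : 'M[E]_m) d : ok B d -> ok (J *m B^T *m K) d.
Proof.
move=> hB i k; rewrite /K mulmxN mxE mg_opp mulJE JmulE mxE.
rewrite -[X in mg X _]add0r -[X in mg X _]addr0 -[X in mg (X + _) _]add0r.
apply: mg_mul; first (apply: mg_mul; first exact: mg_sign_nat).
  by apply: mg_le (hB _ _) => /=; have := ltn_ord i; have := ltn_ord k; lia.
exact: mg_sign_nat.
Qed.

Lemma map_unit (A : 'M[E]_m) : (map_mx cj A \in unitmx) = (A \in unitmx).
Proof. exact: map_unitmx. Qed.

Lemma theta_unit (A : 'M[E]_m) : A \in unitmx -> theta S A \in unitmx.
Proof.
move=> uA; rewrite thetaE !unitmx_mul Junit Kunit unitmx_tr map_unit unitmx_inv uA.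
by [].
Qed.

Lemma theta_inv (A : 'M[E]_m) : A \in unitmx -> invmx (theta S A) = theta S (invmx A).
Proof.
move=> uA.
have uX : (map_mx cj (invmx A))^T \in unitmx by rewrite unitmx_tr map_unit unitmx_inv.
rewrite !thetaE invmxM ?unitmx_mul ?Junit ?Kunit // invmxM ?Junit //.
rewrite invK invJ -trmx_inv -map_invmx mulmxA.
by [].
Qed.

Lemma theta_mul (A B : 'M[E]_m) : A \in unitmx -> B \in unitmx ->
  theta S (A *m B) = theta S A *m theta S B.
Proof.
move=> uA uB; rewrite !thetaE invmxM // map_mxM trmx_mul.
by rewrite !mulmxA -(mulmxA _ K J) KJ mulmx1.
Qed.

Lemma theta_theta (A : 'M[E]_m) : A \in unitmx -> theta S (theta S A) = A.
Proof.
move=> uA; rewrite [in LHS]thetaE theta_inv // thetaE invmxK !map_mxM mapJ mapK map_trmx map_cjK.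
rewrite !trmx_mul trmxK Jtr Ktr.
rewrite !mulmxA JJ -!mulmxA KK mulmxN mulmx1 mulNmx mul1mx opprK.
by [].
Qed.

Lemma ok_theta (A : 'M[E]_m) d : ok (invmx A) d -> ok (theta S A) d.
Proof. by move=> h; rewrite thetaE; apply: ok_JtrK; apply: ok_conj. Qed.

Lemma good_theta (A : 'M[E]_m) d : good A d -> good (theta S A) (- d).
Proof.
case=> uA oA oiA; split.
- exact: theta_unit.
- exact: ok_theta.
- rewrite theta_inv // opprK; apply: ok_theta; rewrite invmxK //.
Qed.

Lemma ok_theta_sub1 (A : 'M[E]_m) d : ok (invmx A - 1%:M) d -> ok (theta S A - 1%:M) d.
Proof.
move=> h.
have -> : theta S A - 1%:M = J *m (map_mx cj (invmx A - 1%:M))^T *m K.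
  rewrite thetaE map_mxB map_mx1 linearB /= trmx1 mulmxBr mulmxBl mulmx1 JK.
  by [].
by apply: ok_JtrK; apply: ok_conj.
Qed.

Lemma mg_inO x : inO S x -> mg 0 x.
Proof.
rewrite /inO /mg /VV => /orP[->//|h]; apply/orP; right.
have h' : (0 <= v x) := h.
have : (0 < m%:Z)%R by lia.
nia.
Qed.

Lemma mg_inP x : inP S x -> mg m%:Z x.
Proof.
rewrite /inP /mg /VV => /orP[->//|h]; apply/orP; right.
have h' : (0 < v x) := h.
have : (0 < m%:Z)%R by lia.
nia.
Qed.

Lemma in_Iw_ok (h : 'M[E]_m) : in_Iw S h -> ok h 0.
Proof.
case/andP=> /andP[/andP[/forallP hO _] _] /forallP hP i j.
have hi := ltn_ord i; have hj := ltn_ord j.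
case: (ltnP j i) => ji.
  have := hP i; move=> /forallP /(_ j); rewrite ji /= => /mg_inP.
  by apply: mg_le; lia.
by have := hO i => /forallP /(_ j) /mg_inO; apply: mg_le; lia.
Qed.

Lemma in_Iw_det (h : 'M[E]_m) : in_Iw S h -> \det h != 0 /\ VV (\det h) = 0.
Proof.
case/andP=> /andP[/andP[_ d0] /eqP dv] _; split => //.
by rewrite /VV /v dv mulr0.
Qed.

Lemma good_Iw (h : 'M[E]_m) : in_Iw S h -> good h 0.
Proof.
move=> hI; have [d0 dv] := in_Iw_det hI; have oh := in_Iw_ok hI.
have uh : h \in unitmx by rewrite unitmxE unitfE.
split => //; rewrite -oppr0; apply: ok_inv => //.
by rewrite dv mulr0.
Qed.

Lemma in_Iplus_ok1 (h : 'M[E]_m) : in_Iplus S h -> ok (h - 1%:M) 1.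
Proof.
case/andP=> hI /forallP hd i j.
have hi := ltn_ord i; have hj := ltn_ord j.
rewrite !mxE; case: (eqVneq i j) => [<-|ne].
  by rewrite mulr1n; have /mg_inP := hd i; apply: mg_le; lia.
rewrite mulr0n subr0.
have oh := in_Iw_ok hI i j.
case: (ltnP j i) => ji.
  case/andP: hI => _ /forallP /(_ i) /forallP /(_ j); rewrite ji /= => /mg_inP.
  by apply: mg_le; lia.
case/andP: hI => /andP[/andP[/forallP /(_ i) /forallP /(_ j) /mg_inO hO _] _] _.
apply: mg_le hO; have : (i : nat) != j by [].
lia.
Qed.

Lemma good_in_Iw (h : 'M[E]_m) : good h 0 -> in_Iw S h.
Proof.
case=> uh oh oih.
have d0 : \det h != 0 by rewrite -unitfE.
have dv : VV (\det h) = 0.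
  have := ok_det oh; have := ok_det oih; rewrite mulr0 det_inv /mg invr_eq0 (negbTE d0) /= VVV //.
  by move=> h1 h2; apply/eqP; rewrite eq_le h2 andbT -oppr_ge0.
apply/andP; split; first (apply/andP; split; first (apply/andP; split)).
- apply/forallP => i; apply/forallP => j.
  have hb : (- (m%:Z) < 0 + (i:nat)%:Z - (j:nat)%:Z)%R.
    by have := ltn_ord i; have := ltn_ord j; lia.
  have := VV_floor hb (oh i j); rewrite /mg /inO /VV => /orP[->//|h2].
  apply/orP; right; have hm : (0 < m%:Z)%R by lia.
  have h3 : 0 <= m%:Z * v (h i j) := h2.
  change (0 <= v (h i j)); nia.
- by [].
- apply/eqP; move: dv; rewrite /VV => dv; have hm : (0 < m%:Z)%R by lia.
  change (v (\det h) = 0); nia.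
- apply/forallP => i; apply/forallP => j; apply/implyP => ji.
  have hb : (0 < 0 + (i:nat)%:Z - (j:nat)%:Z)%R by lia.
  have := VV_ge1 hb (oh i j); rewrite /inP => /orP[->//|h2]; apply/orP; right.
  change (0 < v (h i j)); have h3 : 1 <= v (h i j) := h2; lia.
Qed.

Lemma modm_eq t (i j : nat) : (i < m)%N -> (j < m)%N -> m%:Z * t = i%:Z - j%:Z -> i = j.
Proof.
move=> hi hj e.
have : (t <= -1) \/ (t = 0) \/ (1 <= t) by lia.
case=> [h|[h|h]]; [nia | subst t; lia | nia].
Qed.

Lemma VV_eq_ord (x y : E) (i j : 'I_m) (a : int) :
  x != 0 -> y != 0 -> VV x = a + (i : nat)%:Z -> VV y = a + (j : nat)%:Z -> i = j.
Proof.
move=> _ _ ex ey; apply: val_inj; apply: (@modm_eq (v x - v y) (i : nat) (j : nat)); rewrite ?ltn_ord //.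
move: ex ey; rewrite /VV => ex ey; rewrite mulrBr ex ey; lia.
Qed.

Definition lead (f : 'I_m -> E) (w : int) (p : 'I_m) : Prop :=
  [/\ f p != 0, VV (f p) = w + (p : nat)%:Z &
      forall i : 'I_m, i != p -> mg (w + (i : nat)%:Z + 1) (f i)].

Lemma lead_mg f w p : lead f w p -> forall i : 'I_m, mg (w + (i : nat)%:Z) (f i).
Proof.
case=> nz e h i; case: (eqVneq i p) => [->|ne].
  by rewrite /mg e lexx orbT.
by apply: mg_le (h i ne); lia.
Qed.

Section Step.
Variable N : 'M[E]_m.
Hypothesis NP1 : ok N 1.
Hypothesis NP2 : forall p, N (predm p) p != 0 /\
  VV (N (predm p) p) = 1 + (predm p : nat)%:Z - (p : nat)%:Z.

Lemma NP3 i p : i != predm p -> mg (2 + (i : nat)%:Z - (p : nat)%:Z) (N i p).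
Proof.
move=> ne; have := NP1 i p; rewrite /mg; case: eqP => //= /eqP nz h.
rewrite le_eqVlt in h; case/orP: h => [/eqP e|h]; last by lia.
have [nz2 e2] := NP2 p.
case/negP: ne; apply/eqP.
apply: (@VV_eq_ord (N i p) (N (predm p) p) i (predm p) (1 - (p : nat)%:Z)) => //.
  by rewrite -e; lia.
by rewrite e2; lia.
Qed.

Lemma lead_step (X : 'M[E]_m) c w p :
  lead (fun i => X i c) w p -> lead (fun i => (N *m X) i c) (w + 1) (predm p).
Proof.
move=> hl; have hmg := lead_mg hl; case: hl => nz e hs.
have [nz2 e2] := NP2 p.
have t0 : N (predm p) p * X p c != 0 by rewrite mulf_neq0.
have vt0 : VV (N (predm p) p * X p c) = w + 1 + (predm p : nat)%:Z.
  by rewrite VVM // e2 e; lia.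
split.
- rewrite mxE; have [] := @mg_dom_sum _ (fun _ => true) (fun j => N (predm p) j * X j c) p isT t0 => // j _ ne.
  rewrite vt0; apply: mg_le (mg_mul (NP1 (predm p) j) (hs j ne)); lia.
- rewrite mxE; have [] := @mg_dom_sum _ (fun _ => true) (fun j => N (predm p) j * X j c) p isT t0.
    move=> j _ ne; rewrite vt0; apply: mg_le (mg_mul (NP1 (predm p) j) (hs j ne)); lia.
  by move=> _ ->.
- move=> i ne; rewrite mxE; apply: mg_sum => j _.
  case: (eqVneq j p) => [->|nej].
    by apply: mg_le (mg_mul (NP3 ne) (hmg p)); lia.
  by apply: mg_le (mg_mul (NP1 i j) (hs j nej)); lia.
Qed.

End Step.

Lemma VV_prod (I : finType) (F : I -> E) :
  (forall i, F i != 0) -> \prod_i F i != 0 /\ VV (\prod_i F i) = \sum_i VV (F i).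
Proof.
move=> h; apply: (big_ind2 (fun x D => x != 0 /\ VV x = D)) => //.
- by rewrite oner_neq0 VV1.
- by move=> x1 x2 y1 y2 [n1 e1] [n2 e2]; rewrite mulf_neq0 // VVM // e1 e2.
Qed.

Lemma mg_prod_strict (I : finType) (F : I -> E) (a : I -> int) k1 :
  (forall k, mg (a k) (F k)) -> mg (a k1 + 1) (F k1) ->
  mg (\sum_k a k + 1) (\prod_k F k).
Proof.
move=> h h1; rewrite (bigD1 k1) //= (bigD1 k1 (P := xpredT)) //=.
apply: mg_le (mg_mul h1 (mg_prod (fun k _ => h k))); rewrite addrAC; exact: lexx.
Qed.

Lemma sum_ord_int n : 2 * \sum_(k < n) (k : nat)%:Z = n%:Z * (n%:Z - 1).
Proof.
elim: n => [|n IH]; first by rewrite big_ord0; lia.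
rewrite big_ord_recr /= mulrDr IH; lia.
Qed.

Lemma det_int (B : 'M[E]_m) : (forall i j, mg 0 (B i j)) -> mg 0 (\det B).
Proof.
move=> h; rewrite /determinant; apply: mg_sum => s _.
rewrite -[X in mg X _]add0r; apply: mg_mul; first exact: mg_sign.
have -> : (0 : int) = \sum_(i < m) (0 : int) by rewrite big1.
by apply: mg_prod => i _; apply: h.
Qed.

Lemma ok_iter0 (A : 'M[E]_m) p : ok A 0 -> ok (iter p (mulmx A) 1%:M) 0.
Proof.
move=> hA; elim: p => [|p IH] /=; first exact: ok1.
by rewrite -[0]add0r; apply: ok_mul.
Qed.

Lemma iter_comm (N z N' : 'M[E]_m) k : N *m z = z *m N' ->
  iter k (mulmx N) z = z *m iter k (mulmx N') 1%:M.
Proof.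
move=> h; elim: k => [|k IH] /=; first by rewrite mulmx1.
by rewrite IH mulmxA h -mulmxA.
Qed.

Definition pos (i0 : 'I_m) (k : nat) : 'I_m := iter k predm i0.

Lemma predm_mod (p : 'I_m) : ((predm p : nat).+1 %% m = p %% m)%N.
Proof.
rewrite /predm /=; have := ltn_ord p; case: ifP => /eqP.
  move=> -> _; rewrite prednK ?modnn ?mod0n //; lia.
by move=> ne _; rewrite prednK //; lia.
Qed.

Lemma pos_mod i0 k : (((pos i0 k : nat) + k) %% m = i0 %% m)%N.
Proof.
elim: k => [|k IH]; first by rewrite addn0.
rewrite /pos iterS -/(pos i0 k) addnS -addSn -modnDml predm_mod modnDml.
exact: IH.
Qed.

Lemma pos_inj i0 (a b : nat) : (a < m)%N -> (b < m)%N -> pos i0 a = pos i0 b -> a = b.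
Proof.
move=> ha hb e.
have := pos_mod i0 a; rewrite -(pos_mod i0 b) e => /eqP.
rewrite eqn_modDl => /eqP; rewrite !modn_small //.
Qed.

Lemma tau_inj i0 : injective (fun k : 'I_m => pos i0 k).
Proof. by move=> a b /pos_inj h; apply: val_inj; apply: h. Qed.

Definition tau i0 : 'S_m := perm (@tau_inj i0).

Lemma lead_ext f g w p : (forall i, f i = g i) -> lead f w p -> lead g w p.
Proof.
move=> e [h1 h2 h3]; split; rewrite -?e //.
by move=> i ne; rewrite -e; apply: h3.
Qed.

Lemma sum3 (f g : 'I_m -> int) c :
  \sum_k (c + f k + g k) = m%:Z * c + \sum_k f k + \sum_k g k.
Proof. rewrite !big_split /= sumr_const card_ord; congr (_ + _ + _); lia. Qed.

Lemma sum_perm_int (s : 'S_m) : \sum_(k < m) (s k : nat)%:Z = \sum_(k < m) (k : nat)%:Z.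
Proof. by rewrite [RHS](reindex_inj (@perm_inj _ s)). Qed.

Lemma final_arith (m0 r j0 : nat) (d a b c S2 : int) : (j0 < m0)%N -> r = (m0.-1 - j0)%N ->
  a + (b + c) = m0%:Z * (d - j0%:Z) + S2 -> 0 <= c -> m0%:Z * r%:Z <= b ->
  S2 = m0%:Z * (m0%:Z - 1) -> a <= m0%:Z * d.
Proof.
move=> hj -> e1 hc hb hS.
have hr : ((m0.-1 - j0)%N : int) = m0%:Z - 1 - j0%:Z by lia.
rewrite hr in hb; rewrite hS in e1.
have : m0%:Z * (m0%:Z - 1 - j0%:Z) = m0%:Z * (m0%:Z - 1) - m0%:Z * j0%:Z by ring.
have : m0%:Z * (d - j0%:Z) = m0%:Z * d - m0%:Z * j0%:Z by ring.
lia.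
Qed.

Lemma claimA (N z N' : 'M[E]_m) :
  ok N 1 ->
  (forall p, N (predm p) p != 0 /\
     VV (N (predm p) p) = 1 + (predm p : nat)%:Z - (p : nat)%:Z) ->
  z \in unitmx -> N *m z = z *m N' -> ok N' 0 ->
  exists d, ok z d /\ ok (invmx z) (- d).
Proof.
move=> NP1 NP2 uz comm okN'.
have [i1 [j1 nz1]] : exists i j, z i j != 0.
  case: (boolP [exists i, exists j, z i j != 0]) => [/existsP[i /existsP[j h]]|hn].
    by exists i, j.
  exfalso.
  have z0 : z = 0.
    apply/matrixP => i j; rewrite mxE; apply/eqP; apply/negP => h; case/negP: hn.
    by apply/existsP; exists i; apply/existsP; exists j; apply/negP.
  have := mulmxV uz; rewrite z0 mul0mx => /matrixP /(_ omax omax).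
  by rewrite !mxE eqxx mulr1n => /eqP; rewrite eq_sym oner_eq0.
pose F := fun (ij : 'I_m * 'I_m) => VV (z ij.1 ij.2) - (ij.1 : nat)%:Z + (ij.2 : nat)%:Z.
pose Pz := fun ij : 'I_m * 'I_m => z ij.1 ij.2 != 0.
have Pz1 : Pz (i1, j1) := nz1.
case: (arg_minP F Pz1) => [[i0 j0]] nz0 hmin.
have {}nz0 : z i0 j0 != 0 := nz0.
pose d := VV (z i0 j0) - (i0 : nat)%:Z + (j0 : nat)%:Z.
have okz : ok z d.
  move=> i j; rewrite /mg; case: eqP => //= /eqP nzij.
  have := hmin (i, j) nzij; rewrite /F /d /=; lia.
have lead0 : lead (fun i => z i j0) (d - (j0 : nat)%:Z) i0.
  split => //; first by rewrite /d; lia.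
  move=> i ne; have := okz i j0; rewrite /mg; case: eqP => //= /eqP nzi h.
  rewrite le_eqVlt in h; case/orP: h => [/eqP e|h]; last by lia.
  exfalso; case/negP: ne; apply/eqP.
  apply: (@VV_eq_ord (z i j0) (z i0 j0) i i0 (d - (j0 : nat)%:Z)) => //.
    by rewrite -e; lia.
  by rewrite /d; lia.
have leadk : forall k : nat, lead (fun i => (iter k (mulmx N) z) i j0)
                                  (d - (j0 : nat)%:Z + k%:Z) (pos i0 k).
  elim => [|k IH]; first by rewrite addr0.
  have -> : d - (j0 : nat)%:Z + (k.+1)%:Z = d - (j0 : nat)%:Z + k%:Z + 1 by lia.
  exact: (lead_step NP1 NP2 IH).
pose C := \matrix_(l, k) (iter k (mulmx N') 1%:M) l j0 : 'M[E]_m.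
have PE : forall i (k : 'I_m), (z *m C) i k = (iter k (mulmx N) z) i j0.
  move=> i k; rewrite (iter_comm k comm) !mxE; apply: eq_bigr => l _; rewrite mxE.
  by [].
have tauE : forall k, tau i0 k = pos i0 k by move=> k; rewrite permE.
have hlead : forall k : 'I_m, lead (fun i => (z *m C) i k) (d - (j0 : nat)%:Z + (k : nat)%:Z) (tau i0 k).
  move=> k; rewrite tauE; apply: lead_ext (leadk k) => i; by rewrite PE.
have hsum : \sum_(k < m) (d - (j0 : nat)%:Z + (k : nat)%:Z + (tau i0 k : nat)%:Z)
     = m%:Z * (d - (j0 : nat)%:Z) + 2 * \sum_(k < m) (k : nat)%:Z.
  by rewrite sum3 sum_perm_int -addrA; congr (_ + _); rewrite -[2]/(1 + 1) mulrDl !mul1r.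
have [dP0 dPv] : \det (z *m C) != 0 /\
    VV (\det (z *m C)) = m%:Z * (d - (j0 : nat)%:Z) + 2 * \sum_(k < m) (k : nat)%:Z.
  rewrite -det_tr.
  have nzk : forall k, (z *m C)^T k (tau i0 k) != 0.
    by move=> k; rewrite mxE; case: (hlead k).
  have [nzp vp] := VV_prod nzk.
  have vk : forall k, VV ((z *m C)^T k (tau i0 k)) = d - (j0 : nat)%:Z + (k : nat)%:Z + (tau i0 k : nat)%:Z.
    by move=> k; rewrite mxE; case: (hlead k) => _ -> _.
  have vp' : VV (\prod_k (z *m C)^T k (tau i0 k)) =
      \sum_(k < m) (d - (j0 : nat)%:Z + (k : nat)%:Z + (tau i0 k : nat)%:Z).
    by rewrite vp; apply: eq_bigr => k _; rewrite vk.
  have [] := @det_dom ((z *m C)^T) (tau i0) nzp.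
    move=> s ne.
    have [k1 hk1] : exists k, s k != tau i0 k.
      apply/existsP; move: ne; apply: contraR; rewrite negb_exists => /forallP h.
      by apply/eqP/permP => k; apply/eqP; have := h k; rewrite negbK.
    rewrite vp'.
    have -> : \sum_(k < m) (d - (j0 : nat)%:Z + (k : nat)%:Z + (tau i0 k : nat)%:Z) =
              \sum_(k < m) (d - (j0 : nat)%:Z + (k : nat)%:Z + (s k : nat)%:Z).
      by rewrite !sum3 !sum_perm_int.
    have := (@mg_prod_strict _ (fun k => (z *m C)^T k (s k)) (fun k => d - (j0 : nat)%:Z + (k : nat)%:Z + (s k : nat)%:Z) k1).
    move=> hps; apply: mg_le (hps _ _); first exact: lexx.
      by move=> k; rewrite mxE; exact: (lead_mg (hlead k) (s k)).
    by rewrite mxE; case: (hlead k1) => _ _ /(_ (s k1) hk1).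
  by move=> h1 h2; split => //; rewrite h2 vp' hsum.
pose r := (m.-1 - j0)%N.
have gP := good_pow r.
case: gP => uP okP okiP.
set Phi := mxpowz _ _ in uP okP okiP.
pose B := invmx Phi *m C.
have CB : C = Phi *m B by rewrite /B mulKVmx.
have Bint : forall i k, mg 0 (B i k).
  move=> i k; rewrite mxE.
  have hb : (- (m%:Z) < - r%:Z + (i : nat)%:Z - (j0 : nat)%:Z)%R.
    by rewrite /r; have := ltn_ord i; have := ltn_ord j0; lia.
  apply: (VV_floor hb); apply: mg_sum => l _.
  have h1 := okiP i l.
  have h2 : mg (0 + (l : nat)%:Z - (j0 : nat)%:Z) (C l k) by rewrite mxE; apply: ok_iter0.
  by apply: mg_le (mg_mul h1 h2); rewrite add0r addrA subrK lexx.
have dB := det_int Bint.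
have dPhi := ok_det okP.
rewrite det_mulmx in dP0 dPv.
have [dz0 dC0] : \det z != 0 /\ \det C != 0 by move: dP0; rewrite mulf_eq0 negb_or => /andP.
rewrite CB det_mulmx in dC0 dPv.
have [dPhi0 dB0] : \det Phi != 0 /\ \det B != 0 by move: dC0; rewrite mulf_eq0 negb_or => /andP.
have hPB : \det Phi * \det B != 0 by rewrite mulf_neq0.
rewrite VVM // VVM // in dPv.
move: dB dPhi; rewrite /mg (negbTE dPhi0) (negbTE dB0) /= => hB hPhi.
have hS := sum_ord_int m.
exists d; split => //; apply: ok_inv => //.
exact: (final_arith (ltn_ord j0) (erefl r) dPv hB hPhi hS).
Qed.

Lemma not_inP x : ~~ inP S x -> x != 0 /\ v x <= 0.
Proof.
rewrite /inP negb_or => /andP[nz h]; split => //.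
have h' : ~~ (0 < v x) := h. by rewrite leNgt.
Qed.

Lemma mul_le0 (t : int) : t <= 0 -> m%:Z * t <= 0.
Proof. move=> h; have : (0 <= m%:Z)%R by lia. nia. Qed.
Lemma mul_lem1 (t : int) : t <= -1 -> m%:Z * t <= - m%:Z.
Proof. move=> h; have : (0 <= m%:Z)%R by lia. nia. Qed.
Lemma mul_ge1 (t : int) : 1 <= t -> m%:Z <= m%:Z * t.
Proof. move=> h; have : (0 <= m%:Z)%R by lia. nia. Qed.

Lemma NP2_of (u : 'M[E]_m) : ok (u - 1%:M) 1 -> affine_generic S u ->
  forall p, (u - 1%:M) (predm p) p != 0 /\
     VV ((u - 1%:M) (predm p) p) = 1 + (predm p : nat)%:Z - (p : nat)%:Z.
Proof.
move=> NP1 [ag1 ag2].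
  move=> p; have hb := NP1 (predm p) p.
  have e : (u - 1%:M) (predm p) p = u (predm p) p.
    by rewrite !mxE (negbTE (predm_neq p)) mulr0n subr0.
  rewrite e in hb *.
  have hp := ltn_ord p.
  case: (eqVneq (p : nat) 0%N) => p0.
    have pm : (predm p : nat) = m.-1 by rewrite /= p0.
    have [nz hv] := not_inP (ag2 (predm p) p pm p0).
    have nz' : u (predm p) p != 0 by move: nz; apply: contra => /eqP ->; rewrite mul0r.
    have hv' : v (u (predm p) p) <= 1.
      move: hv; rewrite /v val_mul // ?invr_eq0 ?unif0 // -/(v _) -/(v _).
      rewrite valV ?unif0 // -/(v _) /v val_unif; lia.
    split => //.
    have hb' : 1 + (m.-1 : nat)%:Z - 0 <= m%:Z * v (u (predm p) p).
      by move: hb; rewrite /mg (negbTE nz') orFb pm p0.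
    rewrite pm p0 /VV.
    have hmm : (m.-1 : nat)%:Z = m%:Z - 1 by lia.
    rewrite hmm in hb' *.
    have hm : (1 < m%:Z)%R by lia.
    move: hb' hv'; set t := v _ => hb' hv'.
    have -> : t = 1.
      have [h0|h0] : t <= 0 \/ 1 <= t by lia.
        by have := mul_le0 h0; lia.
      lia.
    lia.
  have pm : (p : nat) = (predm p : nat).+1.
    by rewrite /= (negbTE p0) prednK //; lia.
  have [nz hv] := not_inP (ag1 (predm p) p pm).
  split => //.
  have hb' : 1 + (predm p : nat)%:Z - (p : nat)%:Z <= m%:Z * v (u (predm p) p).
    by move: hb; rewrite /mg (negbTE nz) orFb.
  rewrite /VV; rewrite pm in hb' *.
  have hm : (1 < m%:Z)%R by lia.
  move: hb' hv; set t := v _ => hb' hv.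
  have -> : t = 0.
    have [h0|h0] : t <= -1 \/ 0 <= t by lia.
      by have := mul_lem1 h0; lia.
    lia.
  lia.
Qed.

Lemma conj_comm (y u : 'M[E]_m) : y \in unitmx ->
  (u - 1%:M) *m invmx y = invmx y *m (y *m u *m invmx y - 1%:M).
Proof.
move=> uy; rewrite mulmxBl mulmxBr mul1mx mulmx1; congr (_ - _).
by rewrite !mulmxA mulVmx ?mul1mx.
Qed.

Lemma u'E_lem (y g T Ty : 'M[E]_m) : Ty \in unitmx ->
  y *m (g *m T) *m invmx y = y *m g *m invmx Ty *m (Ty *m T *m invmx y).
Proof.
by move=> u; rewrite !mulmxA -(mulmxA _ (invmx Ty)) mulVmx // mulmx1.
Qed.

Lemma main_m (g y : 'M[E]_m) :
  in_Iplus S g -> affine_generic S (Nmx S g) -> y \in unitmx ->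
  in_ZIplusPhi S (y *m g *m invmx (theta S y)) -> in_ZIPhi S y.
Proof.
move=> gI ag uy [a [h [k [a0 hI ex]]]].
have gIw : in_Iw S g by case/andP: gI.
have gg := good_Iw gIw.
case: (gg) => ug okg okig.
set u := Nmx S g.
have gth := good_theta gg.
case: (gth) => uth okth okith.
have ok_gm1 := in_Iplus_ok1 gI.
have ok_igm1 : ok (invmx g - 1%:M) 1.
  have -> : invmx g - 1%:M = - (invmx g *m (g - 1%:M)).
    by rewrite mulmxBr mulmx1 mulVmx // opprB.
  by apply: ok_opp; have := ok_mul okig ok_gm1; rewrite oppr0 add0r.
have ok_thm1 := ok_theta_sub1 ok_igm1.
have NP1 : ok (u - 1%:M) 1.
  have -> : u - 1%:M = (g - 1%:M) *m theta S g + (theta S g - 1%:M).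
    by rewrite /u /Nmx mulmxBl mul1mx addrA subrK.
  by apply: ok_add => //; have := ok_mul ok_gm1 okth; rewrite oppr0 addr0.
have NP2 := NP2_of NP1 ag.
pose z := invmx y.
have uz : z \in unitmx by rewrite unitmx_inv.
pose u' := y *m u *m z.
have comm : (u - 1%:M) *m z = z *m (u' - 1%:M) by apply: conj_comm.
set x := y *m g *m invmx (theta S y) in ex.
have uthy : theta S y \in unitmx by apply: theta_unit.
have ux : x \in unitmx by rewrite /x !unitmx_mul uy ug unitmx_inv.
have thx : theta S x = theta S y *m theta S g *m invmx y.
  rewrite /x theta_mul ?unitmx_mul ?uy ?ug ?unitmx_inv //.
  by rewrite theta_mul // theta_inv // theta_theta.
have hu : u' = x *m theta S x by rewrite thx /x /u' /u /z /Nmx; exact: u'E_lem uthy.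
have gx : good x (VV a + 0 + k).
  rewrite ex; apply: good_mul; last exact: good_pow.
  apply: good_mul; first exact: good_scalar.
  by apply: good_Iw; case/andP: hI.
have gxt := good_mul gx (good_theta gx).
have okN' : ok (u' - 1%:M) 0.
  rewrite hu; apply: ok_sub; last exact: ok1.
  by case: gxt => _ o _; apply: ok_le o; rewrite addrN lexx.
have [d [okz okiz]] := claimA NP1 NP2 uz comm okN'.
have gy : good y (- d).
  have e : invmx z = y by rewrite /z invmxK.
  split => //; first by rewrite -e.
  by rewrite opprK.
pose Phi := mxpowz (@phi1 E S m) (- d).
have gPi := good_inv (good_pow (- d)).
have gh := good_mul gy gPi.
exists 1, (y *m invmx Phi), (- d); split.
- exact: oner_neq0.
- apply: good_in_Iw; move: gh; rewrite opprK addNr; exact.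
- have [uPhi _ _] := good_pow (- d).
  by rewrite mul1mx mulmxKV.
Qed.

End Val.

Unset Implicit Arguments.

Theorem lemma3p5 (E : fieldType) (S : padic_unram_quad E) (n : nat)
    (g y : 'M[E]_(n.*2)) :
  (0 < n)%N ->
  in_Iplus S g ->
  affine_generic S (Nmx S g) ->
  y \in unitmx ->
  in_ZIplusPhi S (y *m g *m invmx (theta S y)) ->
  in_ZIPhi S y.
Proof.
move=> n0.
have m1 : (1 < n.*2)%N by rewrite -addnn; lia.
have me : ~~ odd n.*2 by rewrite odd_double.
exact: (main_m m1 me).
Qed.
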